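(* For any integer $x\in\mathbb{N}\setminus\{1\}$, the filter $\mathcal{F}_{\{1,x\}}$ is the greatest element (with respect to inclusion) of the set $\{\mathcal{F}_{\{1,x^n\}}:n\in\mathbb{N}\}$. If moreover $x\notin\{2m:m\in\mathbb{N}\}\cup\{2^m-1:m\in\mathbb{N}\}$, then $\{n\in\mathbb{N}:\mathcal{F}_{\{1,x^n\}}=\mathcal{F}_{\{1,x\}}\}=\{1\}$.
   Context: $\mathbb{N}=\{1,2,\dots\}$, $\mathbb{N}_0=\{0\}\cup\mathbb{N}$. The Kirch topology $\tau_K$ on $\mathbb{N}$ is generated by the base of all $a+b\mathbb{N}_0=\{a+bn:n\in\mathbb{N}_0\}$ with $a,b\in\mathbb{N}$ coprime and $b$ square-free. Closures $\overline{U}$ are in $\tau_K$; $\tau_y=\{U\in\tau_K:y\in U\}$. For finite $E\subseteq\mathbb{N}$, $\mathcal{F}_E=\{B\subseteq\mathbb{N}:\exists (U_y)_{y\in E}\in\prod_{y\in E}\tau_y\ (\bigcap_{y\in E}\overline{U_y}\subseteq B)\}$. *)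

(* Defs.v *)
From mathcomp Require Import all_boot.
From mathcomp Require Import classical_sets.
Set Implicit Arguments. Unset Strict Implicit. Unset Printing Implicit Defensive.
Local Open Scope classical_set_scope.

(* The ambient space N = {1,2,...} is represented by the positive naturals
   inside nat; all subsets of N are subsets of nat contained in Npos. *)
Definition Npos : set nat := [set n | (0 < n)%N].

Definition squarefree (b : nat) : Prop := forall p, prime p -> ~~ (p * p %| b)%N.

Definition arith (a b : nat) : set nat := [set m | exists n : nat, m = (a + b * n)%N].

Definition kirch_param (a b : nat) : Prop :=
  (0 < a)%N /\ (0 < b)%N /\ coprime a b /\ squarefree b.

Definition kirch_open (U : set nat) : Prop :=
  U `<=` Npos /\
  forall x, U x -> exists a b, kirch_param a b /\ arith a b x /\ arith a b `<=` U.

Definition kirch_closure (U : set nat) : set nat :=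
  [set x | Npos x /\ forall V, kirch_open V -> V x -> exists z, V z /\ U z].

Definition tau (y : nat) : set (set nat) := [set U | kirch_open U /\ U y].

Definition filterF (E : set nat) : set (set nat) :=
  [set B | B `<=` Npos /\
     exists Uf : nat -> set nat, (forall y, E y -> tau y (Uf y)) /\
       [set z | forall y, E y -> kirch_closure (Uf y) z] `<=` B].

Definition pair1 (x : nat) : set nat := [set y | y = 1%N \/ y = x].

(* Main.v *)
Require Import Defs.
From mathcomp Require Import all_boot.
From mathcomp Require Import classical_sets.
From mathcomp Require Import zify.
From Stdlib Require Import Classical.
Local Open Scope classical_set_scope.
Set Implicit Arguments. Unset Strict Implicit. Unset Printing Implicit Defensive.
Lemma powexp y i : exists c, (1+y)^i = 1 + i*y + y*y*c.
Proof.
elim: i => [|i [c IH]]; first by exists 0; rewrite expn0; lia.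
exists (c + i + y*c); rewrite expnS IH; nia.
Qed.

Lemma phisum y k : exists C, \sum_(i<k) (1+y)^i = k + y * 'C(k,2) + y*y*C.
Proof.
elim: k => [|k [C IH]]; first by exists 0; rewrite big_ord0 bin0n; lia.
have [c hc] := powexp y k.
exists (C + c); rewrite big_ord_recr /= IH hc binS bin1; nia.
Qed.

Lemma zsig_prime x q : 2 <= x -> prime q ->
  (q = 2 -> forall m, 0 < m -> x <> 2^m - 1) ->
  exists p, prime p /\ p %| x^q - 1 /\ ~~ (p %| x - 1).
Proof.
move=> x2 pq hq.
set Phi := \sum_(i<q) x^i.
have eP : x^q - 1 = (x - 1) * Phi by rewrite !subn1 predn_exp.
case: (classic (exists p, prime p /\ p %| Phi /\ ~~ (p %| x - 1))) => [[p [pp [pd pn]]]|H].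
  by exists p; split=> //; split=> //; rewrite eP dvdn_mull.
exfalso.
have H' : forall p, prime p -> p %| Phi -> p %| x - 1.
  move=> p pp pd; apply/negPn/negP => pn; apply: H; by exists p.
have q2 : 2 <= q by apply: prime_gt1.
set y := x - 1.
have ex : x = 1 + y by rewrite /y; lia.
have [C hC] := phisum y q.
have ePhi : Phi = q + y * ('C(q,2) + y*C) by rewrite /Phi ex hC; nia.
have hb : forall p, prime p -> p %| Phi -> p = q.
  move=> p pp pd; have py := H' p pp pd.
  move: pd; rewrite ePhi dvdn_addl; last by rewrite dvdn_mulr.
  by rewrite dvdn_prime2 // => /eqP.
have Phi1 : 1 < Phi by rewrite ePhi; lia.
have qy : q %| y.
  have [p pp pd] := pdivP Phi1; have := hb p pp pd => epq.
  by rewrite -epq; apply: H'.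
case: (eqVneq q 2) => [e2|qn2].
  have eP2 : Phi = 1 + x by rewrite /Phi e2 !big_ord_recr big_ord0 /= expn0 expn1.
  have x1 : 0 < 1 + x by [].
  have [m cm em] := pfactor_coprime (isT : prime 2) x1.
  have m1 : m = 1.
    have m0 : 0 < m by case: (posnP m) em => // ->.
    case: (ltngtP m 1) => // m1; first by lia.
    have [p pp pm] := pdivP m1.
    have e : p = q by apply: (hb p pp); rewrite eP2 em dvdn_mulr.
    by move: cm; rewrite prime_coprime // -e2 -e pm.
  move: em; rewrite m1 mul1n; set k := logn 2 (1 + x) => ek.
  case: (posnP k) => k0.
    by move: ek; rewrite k0 expn0; lia.
  by apply: (hq e2 k k0); lia.
have q3 : 0 < 2 < q by apply/andP; split=> //; lia.
have qC := prime_dvd_bin pq q3.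
have : q * q %| y * ('C(q,2) + y*C).
  by apply: dvdn_mul => //; rewrite dvdn_add // dvdn_mulr.
move/dvdnP=> [T eT].
have eP3 : Phi = q * (1 + q * T) by rewrite ePhi eT; nia.
case: (ltngtP (1 + q * T) 1) => hT; first by lia.
  have [p pp pm] := pdivP hT.
  have e : p = q by apply: (hb p pp); rewrite eP3 dvdn_mull.
  move: pm; rewrite e dvdn_addl ?dvdn_mulr // dvdn1 => /eqP q1.
  by move: q2; rewrite q1.
have T0 : T = 0 by nia.
have C2 : 0 < 'C(q,2) by rewrite bin_gt0.
have y1 : 0 < y by rewrite /y; lia.
move: eT; rewrite T0 mul0n => /eqP; rewrite muln_eq0 => /orP [] /eqP; lia.
Qed.

Lemma exists_p x n : 2 <= x -> 2 <= n -> (forall m, 0 < m -> x <> 2^m - 1) ->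
  exists p, prime p /\ p %| x^n - 1 /\ ~~ (p %| x - 1).
Proof.
move=> x2 n2 hm.
have pq := pdiv_prime n2.
have [p [pp [pd pn]]] := zsig_prime x2 pq (fun _ => hm).
exists p; split=> //; split=> //.
apply: (dvdn_trans pd).
have /dvdnP [k ek] := pdiv_dvd n.
move: pd; set q := pdiv n => pd.
by rewrite ek mulnC expnM !subn1 [X in _ %| X]predn_exp dvdn_mulr.
Qed.
Lemma sqf_prime p : prime p -> squarefree p.
Proof.
move=> pp q pq; apply/negP => H.
have qp : q %| p by apply: dvdn_trans H; apply: dvdn_mulr.
move: qp; rewrite dvdn_prime2 // => /eqP eqp.
move: H; rewrite eqp => /(dvdn_leq (prime_gt0 pp)).
have := prime_gt1 pp; nia.
Qed.

Lemma sqf_dvd d g : d %| g -> squarefree g -> squarefree d.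
Proof. by move=> dg sg p pp; apply/negP => H; move: (sg p pp); rewrite (dvdn_trans H dg). Qed.

Lemma sqf_logn b p : 0 < b -> squarefree b -> prime p -> logn p b <= 1.
Proof.
move=> b0 sb pp; have := sb p pp; rewrite mulnn pfactor_dvdn //; lia.
Qed.

Lemma sqf_lcm b d : 0 < b -> 0 < d -> squarefree b -> squarefree d -> squarefree (lcmn b d).
Proof.
move=> b0 d0 sb sd p pp; rewrite mulnn pfactor_dvdn ?lcmn_gt0 ?b0 ?d0 // logn_lcm //.
have := sqf_logn b0 sb pp; have := sqf_logn d0 sd pp; rewrite -ltnNge; lia.
Qed.

Lemma sq_dvd_aux t n g : g <= n -> 0 < g -> squarefree g ->
  (forall p, prime p -> p %| g -> p %| t) -> g %| t.
Proof.
elim: n g => [|n IH] g gn g0 sg H; first by lia.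
case: (ltngtP g 1) => g1; first by lia.
  have [p pp pg] := pdivP g1.
  have eg : g = p * (g %/ p) by rewrite mulnC divnK.
  set h := g %/ p in eg.
  have h0 : 0 < h by move: g0; rewrite eg muln_gt0 => /andP [].
  have cph : coprime p h.
    rewrite prime_coprime //; apply/negP => ph.
    by move: (sg p pp); rewrite eg dvdn_pmul2l ?prime_gt0 // ph.
  rewrite eg Gauss_dvd //; apply/andP; split; first by apply: H.
  have p2 := prime_gt1 pp.
  apply: (IH h) => //.
  - move: gn; rewrite eg; nia.
  - by apply: (sqf_dvd _ sg); rewrite eg dvdn_mull.
  - by move=> q qp qh; apply: H => //; rewrite eg dvdn_mull.
by rewrite g1 dvd1n.
Qed.

Lemma sq_dvd g t : 0 < g -> squarefree g ->
  (forall p, prime p -> p %| g -> p %| t) -> g %| t.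
Proof. exact: (@sq_dvd_aux t g g (leqnn g)). Qed.

Lemma modDMp z p k : (z + p * k) %% p = z %% p.
Proof. by rewrite addnC mulnC modnMDl. Qed.

Lemma param_open a b : kirch_param a b -> kirch_open (arith a b).
Proof.
move=> hp; split.
  move=> m [n ->]; rewrite /Npos /=; case: hp => a0 _; lia.
by move=> x hx; exists a, b; split=> //; split...
Qed.

Lemma open_basic V z : kirch_open V -> V z ->
  exists e, kirch_param z e /\ arith z e `<=` V.
Proof.
move=> [_ hV] Vz; have [a [b [[a0 [b0 [cab sb]]] [[k ek] sub]]]] := hV z Vz.
exists b; split.
  split; first by rewrite ek; lia.
  split=> //; split=> //.
  by rewrite /coprime gcdnC ek addnC mulnC gcdnMDl gcdnC.
move=> m [j ->]; apply: sub; exists (k + j); rewrite ek; lia.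
Qed.

Lemma cl_mono U V : U `<=` V -> kirch_closure U `<=` kirch_closure V.
Proof.
move=> UV z [zp H]; split=> // W oW Wz; have [w [Ww Uw]] := H W oW Wz.
by exists w; split=> //; apply: UV.
Qed.

Lemma cl_char_l a b z p : kirch_param a b -> kirch_closure (arith a b) z ->
  prime p -> p %| b -> ~~ (p %| z) -> z = a %[mod p].
Proof.
move=> [a0 [b0 [cab sb]]] [zp H] pp pb pz.
have op : kirch_open (arith z p).
  apply: param_open; split=> //; split; first exact: prime_gt0.
  split; first by rewrite coprime_sym prime_coprime.
  exact: sqf_prime.
have zz : arith z p z by exists 0; rewrite muln0 addn0.
have [w [[k ek] [j ej]]] := H _ op zz.
move: pb => /dvdnP [c ec].
have := congr1 (modn^~ p) ek; rewrite ej modDMp /=.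
have -> : a + b * j = a + p * (c * j) by rewrite ec; nia.
by rewrite modDMp => ->.
Qed.

Lemma cl_char_r a b z : kirch_param a b -> 0 < z ->
  (forall p, prime p -> p %| b -> ~~ (p %| z) -> z = a %[mod p]) ->
  kirch_closure (arith a b) z.
Proof.
move=> [a0 [b0 [cab sb]]] z0 H; split; first by [].
move=> V oV Vz; have [e [[_ [e0 [cze se]]] sub]] := open_basic oV Vz.
have zle : z <= a + b * z by timeout 10 nia.
set g := gcdn b e.
set t := a + b * z - z.
have gt : g %| t.
  apply: sq_dvd.
  - by rewrite gcdn_gt0 b0.
  - by apply: (sqf_dvd _ se); rewrite dvdn_gcdr.
  move=> p pp pg.
  have pb : p %| b by apply: dvdn_trans pg (dvdn_gcdl _ _).
  have pe : p %| e by apply: dvdn_trans pg (dvdn_gcdr _ _).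
  have pz : ~~ (p %| z).
    apply/negP => pz; have : p %| gcdn z e by rewrite dvdn_gcd pz pe.
    by rewrite (eqP cze) dvdn1 => /eqP p1; move: pp; rewrite p1.
  have hz := H p pp pb pz.
  rewrite /t -eqn_mod_dvd //.
  move/dvdnP: pb => [c ->].
  have -> : a + c * p * z = a + p * (c * z) by timeout 10 nia.
  by rewrite modDMp hz.
have [s _ hs] := Bezoutl e b0.
move/dvdnP: gt => [t' et].
set K := s * (b - 1) * t'.
have hK : e * K = t %[mod b].
  have h1 : b %| g * (b-1) * t' + e * K.
    have -> : g*(b-1)*t' + e*K = (g + s*e) * ((b-1)*t') by rewrite /K; timeout 10 nia.
    by rewrite dvdn_mulr.
  have h2 : b %| g*(b-1)*t' + t.
    have -> : g*(b-1)*t' + t = b * (g * t') by rewrite et; timeout 10 nia.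
    by rewrite dvdn_mulr.
  apply/eqP; rewrite -(eqn_modDl (g*(b-1)*t')).
  by rewrite /dvdn in h1 h2; rewrite (eqP h1) (eqP h2).
set w := z + e * (K + b * a).
have hw : arith z e w by exists (K + b*a).
exists w; split; first by apply: sub.
have aw : a <= w.
  have h : a <= e * (b * a) by rewrite mulnA leq_pmull // muln_gt0 e0 b0.
  by rewrite /w mulnDr; apply: (leq_trans h); rewrite addnA leq_addl.
have wa : w = a %[mod b].
  have -> : w = (z + e*K) + b*(e*a) by rewrite /w; clear; timeout 10 nia.
  rewrite modDMp -modnDmr hK modnDmr /t subnKC //.
  by rewrite modDMp.
have : b %| w - a by rewrite -eqn_mod_dvd // wa.
move/dvdnP=> [j ej]; exists j; lia.
Qed.
Lemma arith_sub a b m : b %| m -> arith a m `<=` arith a b.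
Proof. by move=> /dvdnP [c ->] w [k ->]; exists (c * k); nia. Qed.

Lemma get_basic (Uf : nat -> set nat) y : tau y (Uf y) ->
  exists e, kirch_param y e /\ arith y e `<=` Uf y.
Proof. by move=> [o u]; apply: open_basic o u. Qed.

Lemma arith_self a b : arith a b a.
Proof. by exists 0; rewrite muln0 addn0. Qed.

Lemma incl_pow x n : 0 < x -> x <> 1 -> 0 < n ->
  filterF (pair1 (x ^ n)) `<=` filterF (pair1 x).
Proof.
move=> x0 x1 n0 B [BN [Uf [hU sub]]]; split=> //.
have [b [pb s1]] := get_basic (hU 1 (or_introl erefl)).
have [d [pd s2]] := get_basic (hU (x ^ n) (or_intror erefl)).
have pb' := pb; have pd' := pd.
move: pb' pd' => [_ [b0 [_ sb]]] [_ [d0 [cd sd]]].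
set m := lcmn b d.
have pm : kirch_param 1 m.
  split=> //; split; first by rewrite lcmn_gt0 b0 d0.
  split; first by rewrite coprime1n.
  exact: sqf_lcm.
have px : kirch_param x d.
  split=> //; split=> //; split=> //.
  by rewrite -(coprime_pexpl _ _ n0).
have x1' : (x == 1) = false by apply/eqP.
exists (fun y => if y == 1 then arith 1 m else arith x d); split.
  move=> y [->|->]; rewrite ?eqxx ?x1'; split; try exact: param_open; exact: arith_self.
move=> z Hz.
have c1 : kirch_closure (arith 1 m) z by have := Hz 1 (or_introl erefl); rewrite eqxx.
have c2 : kirch_closure (arith x d) z by have := Hz x (or_intror erefl); rewrite x1'.
apply: sub => y [->|->].
  apply: (cl_mono s1); apply: (cl_mono (arith_sub (dvdn_lcml b d))); exact: c1.
apply: (cl_mono s2); apply: cl_char_r => //; first by case: c1.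
move=> p pp pdv pz.
have h1 := cl_char_l pm c1 pp (dvdn_trans pdv (dvdn_lcmr b d)) pz.
have h2 := cl_char_l px c2 pp pdv pz.
by rewrite -modnXm -h2 h1 modnXm exp1n.
Qed.

Lemma strict x n p : 0 < x -> 0 < n -> prime p -> p %| x ^ n - 1 -> ~~ (p %| x - 1) ->
  filterF (pair1 x) `<=` filterF (pair1 (x ^ n)) -> False.
Proof.
move=> x0 n0 pp pxn px1 incl.
have xn0 : 0 < x ^ n by rewrite expn_gt0 x0.
have x1 : x <> 1 by move=> e; move: px1; rewrite e subnn dvdn0.
have x1' : (x == 1) = false by apply/eqP.
have pxc : ~~ (p %| x).
  apply/negP => px.
  have : p %| x ^ n - (x ^ n - 1) by rewrite dvdn_sub // Euclid_dvdX // px n0.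
  have -> : x ^ n - (x ^ n - 1) = 1 by lia.
  by rewrite dvdn1 => /eqP p1; move: pp; rewrite p1.
have p1 : kirch_param 1 p.
  split=> //; split; first exact: prime_gt0.
  split; first by rewrite coprime1n. exact: sqf_prime.
have p2 : kirch_param x p.
  split=> //; split; first exact: prime_gt0.
  split; first by rewrite coprime_sym prime_coprime.
  exact: sqf_prime.
set B0 := [set z | kirch_closure (arith 1 p) z /\ kirch_closure (arith x p) z].
have FB0 : filterF (pair1 x) B0.
  split; first by move=> z [[]].
  exists (fun y => if y == 1 then arith 1 p else arith x p); split.
    move=> y [->|->]; rewrite ?eqxx ?x1'; split; try exact: param_open; exact: arith_self.
  move=> z Hz; split.
    by have := Hz 1 (or_introl erefl); rewrite eqxx.
  by have := Hz x (or_intror erefl); rewrite x1'.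
have [_ [Uf [hU sub]]] := incl _ FB0.
have [b [pb s1]] := get_basic (hU 1 (or_introl erefl)).
have [d [pd s2]] := get_basic (hU (x ^ n) (or_intror erefl)).
have pb' := pb; have pd' := pd.
move: pb' pd' => [_ [b0 [_ sb]]] [_ [d0 [cd sd]]].
have M0 : 0 < b * d by rewrite muln_gt0 b0 d0.
have [r cr er] := pfactor_coprime pp M0.
set z := chinese p r 1 0.
have hz1 : z = 1 %[mod p] by apply: chinese_modl.
have hz2 : z = 0 %[mod r] by apply: chinese_modr.
have pg1 := prime_gt1 pp.
have zp1 : z %% p = 1 by rewrite hz1 modn_small.
have z0 : 0 < z by move: zp1; case: (z) => //; rewrite mod0n.
have rz : r %| z by rewrite /dvdn hz2 mod0n.
have key : forall q, prime q -> q %| b * d -> q <> p -> q %| z.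
  move=> q qp qM qnp; apply: dvdn_trans rz.
  move: qM; rewrite er Euclid_dvdM // => /orP [] // .
  rewrite Euclid_dvdX // => /andP [qdp _].
  by move: qdp; rewrite dvdn_prime2 // => /eqP.
have pz : ~~ (p %| z) by rewrite /dvdn zp1.
have cb : kirch_closure (arith 1 b) z.
  apply: cl_char_r => // q qp qb qz.
  case: (eqVneq q p) => [->|qnp]; first by rewrite hz1.
  by move: qz; rewrite key // ?dvdn_mulr //; move/eqP: qnp.
have cd' : kirch_closure (arith (x ^ n) d) z.
  apply: cl_char_r => // q qp qb qz.
  case: (eqVneq q p) => [->|qnp].
    rewrite hz1; apply/eqP; rewrite eq_sym eqn_mod_dvd //.
  by move: qz; rewrite key // ?dvdn_mull //; move/eqP: qnp.
have : B0 z.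
  apply: sub => y [->|->]; [exact: (cl_mono s1) | exact: (cl_mono s2)].
move=> [q1 q2].
have e1 := cl_char_l p1 q1 pp (dvdnn p) pz.
have e2 := cl_char_l p2 q2 pp (dvdnn p) pz.
move: px1; rewrite -eqn_mod_dvd // -e2 e1 eqxx //.
Qed.

Theorem lemma3p20 (x : nat) (hx : (0 < x)%N) (hx1 : x <> 1%N) :
  (* F_{1,x} is the greatest element of {F_{1,x^n} : n in N} *)
  ((exists n : nat, (0 < n)%N /\ filterF (pair1 (x ^ n)) = filterF (pair1 x)) /\
   (forall n : nat, (0 < n)%N -> filterF (pair1 (x ^ n)) `<=` filterF (pair1 x))) /\
  ((~ (exists m : nat, (0 < m)%N /\ x = (2 * m)%N) /\
    ~ (exists m : nat, (0 < m)%N /\ x = (2 ^ m - 1)%N)) ->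
   [set n : nat | (0 < n)%N /\ filterF (pair1 (x ^ n)) = filterF (pair1 x)] = [set 1%N]).
Proof.
split.
  split; first by exists 1; rewrite expn1.
  by move=> n n0; apply: incl_pow.
move=> [_ nm].
have x2 : 2 <= x by lia.
apply/seteqP; split => n /=.
  move=> [n0 eq].
  case: (ltngtP n 1) => // n2; first by lia.
  have hm : forall m, 0 < m -> x <> 2 ^ m - 1 by move=> m m0 e; apply: nm; exists m.
  have [p [pp [pd pn]]] := exists_p x2 n2 hm.
  exfalso; apply: (strict hx (ltnW n2) pp pd pn); by rewrite eq.
by move=> ->; split=> //; rewrite expn1.
Qed.
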